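(* For every $t \in \mathbb{N}_0$ and every integer $b \ge 2$, the cyclotomic polynomial $\Phi_b(x)$ does not divide \[ Q_t(x) = x^{4t+7} - x^{4t+5} - x^{4t+4} + 2x^{2t+4} + x^{2t+3} + x^{2t+2} + x^{2t} - 2x^{t+3} - x^2 - 1. \]
   Context: $\Phi_b(x) = \prod_\zeta (x-\zeta)$, where $\zeta$ ranges over the primitive $b$-th roots of unity, is the $b$-th cyclotomic polynomial. *)

(* Defs.v *)
From mathcomp Require Import all_boot all_order all_algebra all_field.
Set Implicit Arguments. Unset Strict Implicit. Unset Printing Implicit Defensive.
Import GRing.Theory Num.Theory.
Local Open Scope ring_scope.

Definition Qt (t : nat) : {poly int} :=
  'X^(4*t+7) - 'X^(4*t+5) - 'X^(4*t+4) + 2%:P * 'X^(2*t+4) + 'X^(2*t+3)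
  + 'X^(2*t+2) + 'X^(2*t) - 2%:P * 'X^(t+3) - 'X^2 - 1.

(* Main.v *)
Require Import Defs.
From mathcomp Require Import all_boot all_order all_algebra all_field.
From mathcomp Require Import zify ssrZ.
From Stdlib Require ZArith.
From mathcomp Require Import ring.
Set Implicit Arguments. Unset Strict Implicit. Unset Printing Implicit Defensive.
Import GRing.Theory.
Local Open Scope ring_scope.

Section Gen.
Variables (R : comNzRingType) (C : Type) (cz : C) (cadd cmul : C -> C -> C)
  (copp : C -> C) (iszero : C -> bool) (f : C -> R).
Hypotheses (f0 : f cz = 0) (fD : forall a b, f (cadd a b) = f a + f b)
  (fM : forall a b, f (cmul a b) = f a * f b) (fN : forall a, f (copp a) = - f a)
  (fZ : forall a, iszero a -> f a = 0).

Fixpoint gev (p : seq C) (x : R) : R := if p is c :: q then f c + x * gev q x else 0.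
Fixpoint gadd (p q : seq C) : seq C := match p, q with
  | nil, _ => q | _, nil => p | a :: p', b :: q' => cadd a b :: gadd p' q' end.
Definition gscale c (p : seq C) := map (cmul c) p.
Fixpoint gmul (p q : seq C) : seq C :=
  if p is c :: p' then gadd (gscale c q) (cz :: gmul p' q) else nil.
Definition gsub p q := gadd p (map copp q).

Lemma gevD p q x : gev (gadd p q) x = gev p x + gev q x.
Proof.
elim: p q => [|a p IH] [|b q] /=; rewrite ?add0r ?addr0 //.
by rewrite IH fD mulrDr addrACA.
Qed.
Lemma gevZ c p x : gev (gscale c p) x = f c * gev p x.
Proof. elim: p => [|a p IH] /=; rewrite ?mulr0 // IH fM mulrDr; congr (_ + _); exact: mulrCA. Qed.
Lemma gevM p q x : gev (gmul p q) x = gev p x * gev q x.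
Proof.
elim: p => [|a p IH] /=; first by rewrite mul0r.
by rewrite gevD gevZ /= f0 IH add0r mulrDl mulrA.
Qed.
Lemma gevN p x : gev (map copp p) x = - gev p x.
Proof. elim: p => [|a p IH] /=; first by rewrite oppr0.
by rewrite IH fN opprD mulrN. Qed.
Lemma gevB p q x : gev (gsub p q) x = gev p x - gev q x.
Proof. by rewrite /gsub gevD gevN. Qed.
Lemma gev0 p x : all iszero p -> gev p x = 0.
Proof. elim: p => [|a p IH] //= /andP[/fZ -> /IH ->]; by rewrite mulr0 addr0. Qed.
Lemma gcert p q x : all iszero (gsub p q) -> gev p x = gev q x.
Proof. by move=> /(gev0 x); rewrite gevB => /eqP; rewrite subr_eq0 => /eqP. Qed.
End Gen.

Section Inst.
Variable R : comNzRingType.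
Definition zR (a : BinNums.Z) : R := (int_of_Z a)%:~R.
Lemma zR0 : zR BinNums.Z0 = 0. Proof. by []. Qed.
Lemma zRD a b : zR (BinInt.Z.add a b) = zR a + zR b.
Proof. rewrite /zR -rmorphD; congr (_%:~R); lia. Qed.
Lemma zRM a b : zR (BinInt.Z.mul a b) = zR a * zR b.
Proof. rewrite /zR -rmorphM; congr (_%:~R); lia. Qed.
Lemma zRN a : zR (BinInt.Z.opp a) = - zR a.
Proof. rewrite /zR -rmorphN; congr (_%:~R); lia. Qed.
Lemma zRZ a : BinInt.Z.eqb a BinNums.Z0 -> zR a = 0.
Proof. by move/BinInt.Z.eqb_spec ->. Qed.

Definition ev1 (p : seq BinNums.Z) (x : R) := gev zR p x.
Definition add1 := gadd BinInt.Z.add.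
Definition mul1 := gmul BinNums.Z0 BinInt.Z.add BinInt.Z.mul.
Definition sub1 := gsub BinInt.Z.add BinInt.Z.opp.
Definition zero1 (p : seq BinNums.Z) := all (fun a => BinInt.Z.eqb a BinNums.Z0) p.

Lemma ev1D p q x : ev1 (add1 p q) x = ev1 p x + ev1 q x.
Proof. rewrite /ev1 /add1; apply: gevD; exact: zRD. Qed.
Lemma ev1M p q x : ev1 (mul1 p q) x = ev1 p x * ev1 q x.
Proof. rewrite /ev1 /mul1; apply: gevM; [exact: zR0|exact: zRD|exact: zRM]. Qed.
Lemma cert1 p q x : zero1 (sub1 p q) -> ev1 p x = ev1 q x.
Proof. rewrite /ev1 /sub1 /zero1; apply: gcert; [exact: zRD|exact: zRN|exact: zRZ]. Qed.

Variable z : R.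
Definition ev2 (P : seq (seq BinNums.Z)) (y : R) := gev (fun p => ev1 p z) P y.
Definition mul2 := gmul nil add1 mul1.
Definition add2 := gadd add1.
Definition sub2 := gsub add1 (map BinInt.Z.opp).
Definition zero2 (P : seq (seq BinNums.Z)) := all zero1 P.
Lemma ev2D P Q y : ev2 (add2 P Q) y = ev2 P y + ev2 Q y.
Proof. rewrite /ev2 /add2; apply: gevD => a b /=; exact: ev1D. Qed.
Lemma ev2M P Q y : ev2 (mul2 P Q) y = ev2 P y * ev2 Q y.
Proof. rewrite /ev2 /mul2; apply: gevM => // a b /=; [exact: ev1D | exact: ev1M]. Qed.
Lemma ev1N p : ev1 (map BinInt.Z.opp p) z = - ev1 p z.
Proof. rewrite /ev1; apply: gevN; exact: zRN. Qed.
Lemma ev1Z p : zero1 p -> ev1 p z = 0.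
Proof. rewrite /ev1 /zero1; apply: gev0; exact: zRZ. Qed.
Lemma cert2 P Q y : zero2 (sub2 P Q) -> ev2 P y = ev2 Q y.
Proof. rewrite /ev2 /sub2 /zero2; apply: gcert => [a b|a|a] /=; [exact: ev1D | exact: ev1N | exact: ev1Z]. Qed.
End Inst.
Fixpoint comp2 (p : seq BinNums.Z) : seq BinNums.Z := if p is c :: q then c :: BinNums.Z0 :: comp2 q else nil.
Fixpoint alt (p : seq BinNums.Z) : seq BinNums.Z := if p is c :: q then c :: map BinInt.Z.opp (alt q) else nil.
Module D.
Import ZArith.
Local Open Scope Z_scope.
Definition A2 : seq (seq Z) := [:: [:: (-1); 0; (-1)];
  [:: 0; 0; 0; (-2)];
  [:: 1; 0; 1; 1; 2];
  [::];
  [:: 0; 0; 0; 0; (-1); (-1); 0; 1]].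
Definition B2 : seq (seq Z) := [:: [:: 1; 0; (-1); (-1)];
  [::];
  [:: 0; 0; 0; 2; 1; 1; 0; 1];
  [:: 0; 0; 0; 0; (-2)];
  [:: 0; 0; 0; 0; 0; (-1); 0; (-1)]].
Definition U2 : seq (seq Z) := [:: [:: 0; 0; 0; 0; 0; 0; 0; 0; 0; 0; 0; 0; 0; (-2); 0; 9; 14; 10; 24; 21; (-39); (-78); (-9); 54; 42; (-91); (-87); 3; 122; 55; (-27); (-35); 0; 24; (-8); (-7); (-4); 8; 0; (-1); (-2); (-2); (-1); 0; (-1)];
  [:: 0; 0; 0; 0; 0; 0; 0; 0; 0; 0; 0; 0; 0; 0; 2; 0; (-8); (-20); (-12); 4; 22; (-10); (-28); 0; 80; 60; 52; (-36); (-10); (-4); 34; (-26); (-58); (-68); (-76); (-18); (-4); 18; 22; 32; 14; 12; 12; 4; 0; 2];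
  [:: 0; 0; 0; 0; 0; 0; 0; 0; 0; 0; 0; 0; 0; 0; 0; 1; 0; (-3); (-3); (-8); (-40); (-66); (-21); 31; 36; (-1); 24; 47; 84; 21; (-40); (-19); 35; 51; 12; (-7); (-37); (-27); (-17); (-17); (-3); 1; (-3); 0; 1];
  [:: 0; 0; 0; 0; 0; 0; 0; 0; 0; 0; 0; 0; 0; 0; 0; 0; 0; 0; 0; 2; 0; (-10); (-24); (-14); (-6); 10; 4; 12; (-10); 32; 2; 14; (-8); 6; 20; 28; 28; (-10); (-2); (-20); (-14); (-8); (-10); (-4); 0; (-2)]].
Definition V2 : seq (seq Z) := [:: [:: 0; 0; 0; 0; 0; 0; 0; 0; 0; 0; 1; 0; (-3); (-7); (-9); (-21); (-25); (-23); (-13); 9; 68; 59; 11; (-47); 36; 75; 100; (-81); (-104); (-27); 66; 37; (-55); (-58); (-44); 24; 5; 7; 20; 7; 2; 6];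
  [:: 0; 0; 0; 0; 0; 0; 0; 0; 0; 0; 0; 0; 0; 0; 2; 0; (-8); (-18); (-10); (-14); 2; 18; 24; (-68); (-62); (-2); 110; 44; (-32); (-60); 42; 122; 68; 16; (-14); (-2); (-30); (-32); (-28); (-20); (-8); (-4); (-4)];
  [:: 0; 0; 0; 0; 0; 0; 0; 0; 0; 0; 0; 0; 0; 0; (-1); (-1); 4; 12; 11; 9; 16; 18; (-10); (-43); (-46); (-13); (-5); (-19); (-16); 37; 47; 8; (-37); (-18); 31; 37; 1; (-24); (-8); 1; 1; 0; (-1); 0; 1];
  [:: 0; 0; 0; 0; 0; 0; 0; 0; 0; 0; 0; 0; 0; 0; 0; 0; 0; 0; (-2); (-2); 12; 38; 26; (-28); (-54); 0; 32; 8; (-50); (-30); 24; 56; (-20); (-68); (-36); 18; 38; 22; 12; 2; 8; (-4); (-8); 0; 0; (-2)]].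
Definition D1 : seq Z := [:: 0; 0; 0; 0; 0; 0; 0; 0; 0; 0; 1; 0; (-4); (-6); (-6); (-18); (-23); (-12); (-5); 26; 119; 120; (-18); (-150); (-67); 148; 156; (-104); (-314); (-104); 156; 148; (-67); (-150); (-18); 120; 119; 26; (-5); (-12); (-23); (-18); (-6); (-6); (-4); 0; 1].
Definition S1 : seq Z := [:: 1; 2; (-1); (-10); (-25); (-58); (-114); (-182); (-255); (-302); (-230); (-38); 136; 160; 117; 222; 483; 640; 483; 222; 117; 160; 136; (-38); (-230); (-302); (-255); (-182); (-114); (-58); (-25); (-10); (-1); 2; 1].
Definition u_sq : seq Z := [:: 12056554412140079730015694751251010690604869954889041736499175383089895207; (-21465744617118087057027270440645933411315850825896202710570158684338901892); 49306083549325301088680353484903912241282907503838333357774633815294304079; (-75157102173868763063711288804315051385909738231136671564805429420413694722); 102277458217779634484695153379713980414574658690685278538195210012845141852; (-178805221810460183162478423897556673713329194348652040274833431600042822398); 199337797865175682871176373913760296573257842532672156513164873919459434435; (-351937610885596404834481886391100210544317968901469171212656474939725382988); 330631349491423954931937071425332801494089521564518268191738894321558493828; (-596619009045547509867165387026751428601943402175218097164945456682177698308); 464308001487366507828132069876294921660524752846231825791997746933504911498; (-961766054176421142303584096232871506502652098793027628043252084691702925038); 710131986716479879514333923616304766576221161532473768995078771443960959949; (-1573394687049599523529944569883115811782076581159194524613620685183386006672); 1158080090807157765600160799762120037824598997555724709288120007902554456866; (-2240850524814145802181340981110774518730434803444656506096960183416159551002); 1338246588512927476435498795789518519382005029267211632979724336061726050546;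 (-2253470995957522225483897727002234818137210197690819954844213483751261221274); 717624128072913366386728959550827723461718297419739097555948504667906451309; (-1068501567643143223987687651539509808463091870323551711175270466606080665878); (-376795126128299092209257534204559554752663856968797312509995674563375476843); 564764831726480762660582319245858430928289612267633992268754489324302343430; (-905061539542950222528957686700516021399630958231926650794456117423006054825); 1268575219296643995404919441334665233163226394127440846641969210940123836330; (-512547193112883199488244757160719232921808654213244134481633464060008578228); 904017251139903312079421933628177871940716323608191226737061158196473953856; (-278216145667458568424558078635085087071653327319088318047160376716362295179); 1010452909442318547806109942792028016177955421299849151073449410256721452128; (-1187132559217235149998190902566269061808132201795279857633406319839995271638); 2665430990860268436667046932724898862876922553875447205413714827269086566610; (-2537431912289067995218093760703654249468950796638989997690417606523883054817); 4503028121880152708247518988417060158439059250216080401567795519552427103866; (-2636133220045646535792745199924985829230613021536898661319759319971549907747); 4516067478080397464512726816305525300620612890348811893444516142104579006356; (-1462726121414168469355561346282189569176064628779521799163623104112747916265); 2724504665721946904170479440874026561325763145911484349163516490790009237554; (-467569528306482529881974698788817705494518893769571015133845455504203673589); 1230258846199074885831469546240597909074203685435351652120811697061380960130; (-472872282541727519979289782519766127088629299536699226586473992281211102512); 1074549655116396636601012129531621170482822545752125304670869283602839480428; (-767054520506818424651377070382837219062866527610558384614733570810033200711); 1267660834369753244125546416664893972949278688608927941919817642674930872600; (-408972665459845287133631772412760786725250795968151637652148574201651845740); 529055482016105823860125653274331648520424763561407403032760952860739774096; 478669336106793301306805799975434502268984566183419815920455965931827287419; (-952061952252345183601941625331983996315146033725374156217655976853039695678);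 1134022075386285906203904065224396767220519193598491081196351704600889185977; (-2039826136456358284485816007603379162117939901730464996608030429673371211724); 1190075568782420367560146062156217480347273278507285654427555161068039699850; (-2204438236279888694387802682548809526468756719781268192367586035779185996208); 942790082233992527603157059725395039036947930510669020627477834157608245210; (-1758073388315402683172497879348454511776140377553584184905442959122079943904); 648630508756741070226389965268001902321695460434383023847513337507103089050; (-1196739591351625902453040038521863221085868960968569208099785036878040350130); 372773925782882906513462152780698961187914875955337257491819121665063986707; (-701107918812669891929052855442623646542765811831238862444378611083796768238); 178067895250575730048765442391991278613606028490598419130645679827177752608; (-345571846089883015822393318371145249104793491979713972147276432191866308484); 79404980323296706415039765485408701621080935124921797741125087696817740491; (-145989546881170021252708751636843771098628797132621170118108847695872258948); 24181333140001552704287042462581964908800440326459189794925984192764254782; (-46493330463594016671826829165152069436832654794358596593201598788012542388); (-4191097224860820290665903927554608780836513621432400334864861837626982709); 2874329482368245478744157245438957645355793524987837949972273533047607472; (-7129828810211636053778832705783527793360591716614582905009310846380270087); 11929428692677241735881867407755521047150827382540447035962134747020275698; (-1753743696392464618507998529148255167938183595692959442440711502211644925); 4471545838332337818717034725198963207143562065469982516694719159444458292].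
Definition v_sq : seq Z := [:: 24068721122776251468362537481723817366672131500034009898521367138220954509; (-2647364207162072403004119061856087969893889083881880762428192081840888522); (-42455482148501550181335192815808669461390598897224905997177875339968514106); 80939462993825015935488497030083576337864550114217981028534141100066913786; 293078929231383667242560365201977124039944295183174236148845198195292895647; 390264288975645505657427784617239828037662411198369655344585651135648543374; 483139056775582884449748544023140660439028462832046542309190940103938990520; 799191926665675454279619882150803950540565030354830498677171169124029432576; 1274867383068366804528916944828836092481907076814625931986117797539105169746; 1146961782859424879108424672650836471698863558470675578214351146523244456636; 196161279906330923252800514672475962334313877108752381096869689324846225322; (-739046664828532446732880388560483471892355826176368813955401237511669447892); (-662479699236214593344712672877446495265809026337570786833835912230053904212); (-109298716256177973987271208737614876365168307098197274159461027670150840864); (-570180108927753538383220103987288716098500474764060196226222334088047449495); (-1807163005693966206026331766808246374671675684107334910090000341708699777278); (-2592623522667405588810333362744312191816992816307697619632044660686153460952); (-1885474210638142307629007187901701406732228037922250631384444075782104396050); (-766359877912761808794657999937001856983146475027010797954086910578445698230); (-386127116785046047093054893693636497718188035235696517456892607029411829410); (-677441374720705219984141101252287377370697775174187001251162642642289468717); (-644196652397637239694930289852356557038988990271261574850081426247220197416); 64656132689280226782975258273232508473687275695686281263118720407171111936; 798896970458324703178597211856851020178616065081244267257261487283389041262; 1130935667614236336710018806431886345977571263308126643039612107037743959116; 996244679685222343243088523966331939807777630362280386550692229573226247624; 714229431832928326438436675688604311630685366122058339993342417491077449818; 446785557508254815993046570888183392681163437434276691387021354918080992400; 237700850465211901265120233808805781547287167887865474726881598115310040802;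 103109027556574327914253756034900426460267418894620922074267736239810980102; 40611382072332488188529588455613205095254255081034565739488975077927200004; 4992696215104700957285233826137878910156226005255419399003445735736389028; (-7189347980272211018926070921249671246348940535247005590948726816677271659); (-4471545838332337818717034725198963207143562065469982516694719159444458292)].
Definition N_sq : Z := 36125275534916331198378232232974828057277001454923051635020542521310849716.
Definition u_nsq : seq Z := [:: 475257678060836287322039261746793675438846156629729292137609113923479623; (-407456846998110207874014223581475297998719643001143342637791504047849898); (-902586480738002855672389573563974363007989261404693049588821374222977970); 1195241607407677108932347036276253566169694572042479184055807741032464086; (-920984078253542558907226350245998636853741872692836331398218393578084831); 81724183490851739859059769845729280021279284128195343967278784406219808; 3385767380896608975080897821108758758589757198929182122206505964169182384; (-1929210278513263363758842994210533427899312042992108987501874073731958236); (-7388749874852241368067530520016024594481292491843205693040076604282290237); 4495932147258722782960192646461532437647605589282613430690978432911182022; 18744960995379760291493508272449496066928811100162097445195616544464124921; (-13449129585357934260093945326063519645014371015154059957632429270204535990); (-35447762443220245962817551173654113177461745447976108149537847946335489697); 28453706632797139772330845863050958645290032702318905830751025005431723608; 52116125120058644388365453750535378429850375040393997784114087460593304298; (-43346629459286504357296135124131090312390133328280595210111444746353475434); (-74734255380387996756044797644910064668831410329358155538195606865647667834); 69124783004175916714990573398629643450424294537569881482172315930853457632; 74284235154747512518808136469682396432044312655773491510683811218388857388; (-75605192774394872782106092344970715879071034942952210157786344383620928590); (-34807002345380454157510447519488564259366470375869236794824170617137148904); 41539836179253114179440958041106085713612850428650727035572238262059702692; (-23053765198895552950404723032134392057897620556316440675924045356284875517);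 17767280894352719088410308333088672213621816196842915914746720404608839588; 44944683770231769857372390499878385216071451879786345884759060506458550798; (-43664659512233197052267555982612579741706451302056262065770179835641965456); (-24712064950850880294137816321767939355948700220975246913559255494861737486); 19654310766162996431006945829713210918241871550883268613772807510094133220; 24542086480548298089538259594854420914627515849235555301102527897699473274; (-10660327501825837532743125640229628155939787688683681720737188047950436360); (-82889791724425535891210781185509590057478475412753902500682755013422593234); 62442353218473420583408222846466703971908572681135939017022582393266040222; 161163382477736549472422859385843744927849368341849941880910725384711630218; (-149661264291323352149221887681714892190203167001004554216704238348318364522); (-149390620558203683630806960794399437759796680320345160127763661407287592521); 148448582710663995167958277996698485973384180627218123638772072710910412548; 74562884172103053419123353449867324935227743332522107615251509197192347192; (-75596897013610992182570335259672372139698605004497419673865720533544488812); (-23298879044470821967742390533542492274083394082484983424772238750733002512); 19248130437794712506480622214606212175739634882717305054805977573139418428; 34083698094687723374918694656565986741389565109293801907632099841751994941; (-29468138845375720900764025910897962973728839321684691506682100872019050432); (-49119421421553514189648269116807644910599523506673719494199753421283764713); 51371945664681663160364840093139876790408914648034548816713788624095296496; 17421729071711557604631580745004657930003099196472726980272400588493027155; (-26102756884320066104423448561707695682425720765397800263041023715297197478); 39958010373091746451933922533558139774407672289915182543380484738289079860; (-30045785507419752931634226346490357730963759615779070878077232593745317974); (-75841627496826681859322626467522865498867518467843848192169978645818757107); 69963800702785921429999051025015098885789152490783486390805714106883356788; 69445028339361762740601371412771682616203563722851374440030281760620272225; (-66293300764811542680752900482880960892910707506872074783607644954534610422); (-51435139846876900926715940061076223612880360804614352100215230167870454119);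 49749517594950361347789795610724642129127458072733915762291329471570566320; 34615197344626043646602611898150954692025858406171757631508192633629410190; (-34218112160030752350118364269904895712505250553592417311242941862046295908); (-18626665350828158876676612801865223722848391338378583644760344476963053909); 18798453664268237121866585112705677714019807134862012302127930312797720154; 7919072588822588286304189411542974711219563356817695154539092675786730060; (-7959001530496418701257754797375424545379243143564653554235749778467555628); (-3668113655032876717012975300385375175262580817917174454977551034757502496); 3823220134659760175126967158362366003547265791330988844128045819605500142; 823913691356991433255219200095495664005615116184651028343244680364209085; (-977475672932793971556776008694723593723819115190338982461609950570215846); 566719903612252412060239295963262819661736034814251970431907866874765813; (-540479031441994459646362841449910124655828159902757133406095506102937688); (-414042606546550056822722465549332779607180865872461708316556751001366482); 447234129053976410098206584681233454856723497081488844525211904149792668].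
Definition v_nsq : seq Z := [:: 36980696839342995637789941557356535141890114595902122926443664824520005; (-543058509123562366770064299912112052878972670258315241637426723799109348); 2266719246473745550018037165588431704728054933228513272854900825891197399; 3868934269431456534218681904913932510478080533546426010585281195002219490; 10005207054026824685354846284718825992088320933987912459396339661505585087; 18502954955358982099659065332975681623338280825583278164566428674123534556; 37371758788673754346176968503478390684599674762397198852376936381349035240; 49912829340735918654904903979189266165942975433699884362746543868756629952; 68894343456335925470522353217911893236363598084814047610853437138672198937; 68511993935904732767407706067840030969546468402859978121426410734684742338; 33237518320907365082831132868353225436536962333513531091035353532094358493; (-16912425614945362843908063626221561107825109305200054641762185760703850332); (-46784573908809623375514457982904840218523191153456267386594068819959443722); (-28918672054361165031696415729931370522078610647583389701469882832248593798); (-32631922690060942246722107671306036719459640000644740987492670278366230788); (-75092940398170871664147483305159895073052857508548683977730479014304943728); (-149520862233369385204007885207488015197248284115679105859938785491214359405); (-144089050853338288501267390960705825655819510506138490559256449492956749406); (-77728995110157160609545261106299782811862880941236502579594296522188036415); (-25428963502489428733610008580771611225658014296023369613320750743159267046); (-28253213060789396540682970011642841178143463004123351054832494106743565679); (-43465456831090177670555543750108658228862235333917990732765987313164204390); (-15473277111392029987717482188971714466970394787677239238099102598973607600); 35548259384130897658106327387256267746171202195828705499027786692695008224; 72190118314211369952208550022129932371188041200029862913504960368641158977; 67308865508499703316107255173484407643678543215037678562649413155117408084; 49751594499467556497924170407600433774095075715785627349303951278306558451; 33549411192357343912516195698434278385492044915796143839488949762142718056; 18624426993890671976498069988869781734744536872312316010461655277439669486;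 7739410097058464288306870327909247408261006946022576504659211108210861712; 3611685540142145024644448360573290938397442133352657071848111321231232053; 921330115481118163193601187867342229013466394566191705513997103955877984; (-480425651561402763373690703813134130106266128290515980733867057298218854); (-447234129053976410098206584681233454856723497081488844525211904149792668)].
Definition N_nsq : Z := 512238374900179282959829203304150210580736271225631415064052778747999628.
Definition u_neg : seq Z := [:: 59311300334236936979240; (-242777596908216503694653); 544866494150669944368546; (-950190525966966802862004); 1500254085358361937627024; (-2008464232772316011050231); 2317327262426528141664582; (-2615660495860763747317207); 2912946835411258315769652; (-2132065043820676912701798); (-179261151806900459282438); 2672034777930211816079218; (-3459140417410282264237216); 2870984191094781196524134; (-3479729937923498466040724); 5855774786279664239763985; (-7422120220979249020412910); 5630954855736121478499196; (-2476563462092727244759150); 847823140304211199871295; (-943078551243991541027084); 607774688986601907351964; 1139409160677325467869444; (-2971739789037253750504442); 3529683613424371976673142; (-2883486220819538961197108); 2016365470594230145924372; (-1238861402337448872290997); 621302198668566116775482; (-264270714333514845403021); 104399967550431398953524; (-9669930424943864328134); (-21265026675135917574314); 10632513337567958787157].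
Definition v_neg : seq Z := [:: 59311300334236936979240; 242777596908216503694653; 544866494150669944368546; 950190525966966802862004; 1500254085358361937627024; 2008464232772316011050231; 2317327262426528141664582; 2615660495860763747317207; 2912946835411258315769652; 2132065043820676912701798; (-179261151806900459282438); (-2672034777930211816079218); (-3459140417410282264237216); (-2870984191094781196524134); (-3479729937923498466040724); (-5855774786279664239763985); (-7422120220979249020412910); (-5630954855736121478499196); (-2476563462092727244759150); (-847823140304211199871295); (-943078551243991541027084); (-607774688986601907351964); 1139409160677325467869444; 2971739789037253750504442; 3529683613424371976673142; 2883486220819538961197108; 2016365470594230145924372; 1238861402337448872290997; 621302198668566116775482; 264270714333514845403021; 104399967550431398953524; 9669930424943864328134; (-21265026675135917574314); (-10632513337567958787157)].
Definition N_neg : Z := 118622600668473873958480.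
Definition zpoly := [:: 0; 0; 0; 0; 0; 0; 0; 0; 0; 0; 1].
Definition m1 := [:: -1; 1].
Lemma chk1 : zero2 (sub2 (add2 (mul2 U2 A2) (mul2 V2 B2)) [:: D1]).
Proof. by vm_compute. Qed.
Lemma chk2 : zero1 (sub1 D1 (mul1 zpoly (mul1 m1 (mul1 m1 S1)))).
Proof. by vm_compute. Qed.
Lemma chk_sq : zero1 (sub1 (add1 (mul1 u_sq S1) (mul1 v_sq (comp2 S1))) [:: N_sq]).
Proof. by vm_compute. Qed.
Lemma chk_nsq : zero1 (sub1 (add1 (mul1 u_nsq S1) (mul1 v_nsq (comp2 (alt S1)))) [:: N_nsq]).
Proof. by vm_compute. Qed.
Lemma chk_neg : zero1 (sub1 (add1 (mul1 u_neg S1) (mul1 v_neg (alt S1))) [:: N_neg]).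
Proof. by vm_compute. Qed.
Lemma Nsq_neq0 : N_sq <> 0. Proof. by vm_compute. Qed.
Lemma Nnsq_neq0 : N_nsq <> 0. Proof. by vm_compute. Qed.
Lemma Nneg_neq0 : N_neg <> 0. Proof. by vm_compute. Qed.
End D.
Import D.
Lemma QtE (w : algC) t : (map_poly intr (Qt t)).[w] =
  w ^+ (4*t+7) - w^+(4*t+5) - w^+(4*t+4) + 2 * w^+(2*t+4) + w^+(2*t+3)
  + w^+(2*t+2) + w^+(2*t) - 2 * w^+(t+3) - w^+2 - 1.
Proof.
rewrite /Qt !(rmorphB, rmorphD, rmorphM) /= !map_polyXn !map_polyC /= !hornerE.
rewrite map_polyX hornerX. ring.
Qed.

Lemma A2E (z y : algC) : ev2 z A2 y = (z^+7 - z^+5 - z^+4)*y^+4 + (2*z^+4+z^+3+z^+2+1)*y^+2 - 2*z^+3*y - (z^+2+1).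
Proof. rewrite /ev2 /ev1 /= /zR /=; cbv beta iota delta [int_of_Z BinPos.Pos.to_nat BinPos.Pos.iter_op Nat.add]. ring. Qed.
Lemma B2E (z y : algC) : ev2 z B2 y = -(z^+5+z^+7)*y^+4 - 2*z^+4*y^+3 + (2*z^+3+z^+4+z^+5+z^+7)*y^+2 + (1 - z^+2 - z^+3).
Proof. rewrite /ev2 /ev1 /= /zR /=; cbv beta iota delta [int_of_Z BinPos.Pos.to_nat BinPos.Pos.iter_op Nat.add]. ring. Qed.

Lemma ev2_single (z y : algC) p : ev2 z [:: p] y = ev1 p z.
Proof. by rewrite /ev2 /= mulr0 addr0. Qed.

Lemma zpolyE (w : algC) : ev1 zpoly w = w ^+ 10.
Proof. rewrite /ev1 /= /zR /=; cbv beta iota delta [int_of_Z BinPos.Pos.to_nat BinPos.Pos.iter_op Nat.add]. ring. Qed.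
Lemma m1E (w : algC) : ev1 m1 w = w - 1.
Proof. rewrite /ev1 /= /zR /=; cbv beta iota delta [int_of_Z BinPos.Pos.to_nat BinPos.Pos.iter_op Nat.add]. ring. Qed.

Lemma rootQ b t (w : algC) : (2 <= b)%N -> 'Phi_b %| Qt t -> b.-primitive_root w ->
  (map_poly intr (Qt t)).[w] = 0.
Proof.
move=> hb /(Pdiv.IdomainMonic.dvdpP (Cyclotomic_monic b)) [q hq] pw.
rewrite hq rmorphM hornerM; apply/eqP; rewrite mulf_eq0; apply/orP; right.
have := root_cyclotomic pw w; rewrite pw -(Cintr_Cyclotomic pw).
exact.
Qed.

Lemma prim_neq0 b (w : algC) : (2 <= b)%N -> b.-primitive_root w -> w != 0.
Proof.
move=> hb pw; apply/eqP => w0.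
have := prim_expr_order pw; rewrite w0 expr0n.
by case: b hb {pw} => // n _ /eqP; rewrite eq_sym oner_eq0.
Qed.

Lemma prim_neq1 b (w : algC) : (2 <= b)%N -> b.-primitive_root w -> w != 1.
Proof.
move=> hb pw; apply/eqP => w1.
have := prim_order_dvd pw 1; rewrite w1 expr1n eqxx.
by move/dvdn_leq => /(_ isT); case: b hb {pw} => // [[]].
Qed.

Lemma rootS b t (w : algC) : (2 <= b)%N -> 'Phi_b %| Qt t -> b.-primitive_root w ->
  ev1 S1 w = 0.
Proof.
move=> hb hd pw.
have w0 := prim_neq0 hb pw; have w1 := prim_neq1 hb pw.
set y := w ^+ t.
have y0 : y != 0 by rewrite expf_neq0.
have hA : ev2 w A2 y = 0.
  rewrite A2E; have := rootQ hb hd pw; rewrite QtE !exprD ?expr0 -/y => h.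
  rewrite -[X in _ = X]h; ring.
have piw : b.-primitive_root w^-1.
  have -> : w^-1 = w ^+ b.-1.
    apply: (mulfI w0); rewrite mulfV // -exprS prednK ?(prim_expr_order pw) //.
    by apply: leq_trans hb.
  rewrite prim_root_exp_coprime //.
  have b0 : (0 < b)%N by apply: ltnW.
  by rewrite -{2}(prednK b0) coprimenS.
have hB : ev2 w B2 y = 0.
  rewrite B2E; have := rootQ hb hd piw; rewrite QtE.
  rewrite !exprD ?expr0 !exprVn -/y => h.
  have -> : -(w^+5+w^+7)*y^+4 - 2*w^+4*y^+3 + (2*w^+3+w^+4+w^+5+w^+7)*y^+2 + (1 - w^+2 - w^+3)
     = w^+7 * y^+4 * ((y ^-1) ^+ 4 * w^-1 ^+ 7 - (y ^-1) ^+ 4 * w^-1 ^+ 5 - (y ^-1) ^+ 4 * w^-1 ^+ 4 +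
                     2 * ((y ^-1) ^+ 2 * w^-1 ^+ 4) + (y ^-1) ^+ 2 * w^-1 ^+ 3 + (y ^-1) ^+ 2 * w^-1 ^+ 2 +
                     (y ^-1) ^+ 2 - 2 * (y ^-1 * w^-1 ^+ 3) - w^-1 ^+ 2 - 1).
    by field; rewrite y0 w0.
  apply/eqP; rewrite mulf_eq0; apply/orP; right; apply/eqP.
  by rewrite -[X in _ = X]h; field; rewrite w0 y0.
have hc := cert2 w y D.chk1.
rewrite ev2D !ev2M hA hB !mulr0 addr0 ev2_single in hc.
have hc2 : ev1 D1 w = ev1 zpoly w * (ev1 m1 w * (ev1 m1 w * ev1 S1 w)).
  by rewrite -!ev1M; exact: cert1 D.chk2.
move: hc2; rewrite -hc => /esym/eqP; rewrite !mulf_eq0 => /orP[|/orP[|/orP[]]] /eqP //.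
- by rewrite zpolyE => /eqP; rewrite expf_eq0 (negbTE w0) andbF.
- by rewrite m1E => /eqP; rewrite subr_eq0 (negbTE w1).
- by rewrite m1E => /eqP; rewrite subr_eq0 (negbTE w1).
Qed.

Lemma ev1_single (x : algC) n : ev1 [:: n] x = zR _ n.
Proof. by rewrite /ev1 /= mulr0 addr0. Qed.

Lemma zR_neq0 n : n <> BinNums.Z0 -> zR algC n != 0.
Proof.
move=> hn; rewrite /zR intr_eq0; apply/negP => /eqP h; apply: hn.
by have := congr1 Z_of_int h; rewrite int_of_ZK.
Qed.

Lemma comp2E p (x : algC) : ev1 (comp2 p) x = ev1 p (x ^+ 2).
Proof.
elim: p => [|c p IH] //=; rewrite /ev1 /= -/(ev1 _ _) -/(ev1 _ _) IH zR0.
by rewrite add0r mulrA -expr2.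
Qed.

Lemma altE p (x : algC) : ev1 (alt p) x = ev1 p (- x).
Proof.
elim: p => [|c p IH] //=; rewrite /ev1 /= -/(ev1 _ _) -/(ev1 _ _) ev1N IH.
by rewrite mulrN mulNr.
Qed.

Lemma cert_contra u v T N (x : algC) :
  zero1 (sub1 (add1 (mul1 u S1) (mul1 v T)) [:: N]) -> N <> BinNums.Z0 ->
  ev1 S1 x = 0 -> ev1 T x = 0 -> False.
Proof.
move=> hc hN h1 h2; have := cert1 x hc.
rewrite ev1D !ev1M h1 h2 !mulr0 addr0 ev1_single => /esym/eqP.
by rewrite (negbTE (zR_neq0 hN)).
Qed.

Theorem mainTheorem4 (t b : nat) : (2 <= b)%N -> ~~ ('Phi_b %| Qt t).
Proof.
move=> hb; apply/negP => hd.
have [z pz] := C_prim_root_exists (ltnW hb).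
have hS := rootS hb hd pz.
have key : forall k, coprime k b -> ev1 S1 (z ^+ k) = 0.
  by move=> k hk; apply: (rootS hb hd); rewrite prim_root_exp_coprime.
case: (boolP (odd b)) => ob.
  have := key 2%N; rewrite coprime2n => /(_ ob); rewrite -comp2E => h2.
  exact: cert_contra D.chk_sq D.Nsq_neq0 hS h2.
set m := b./2.
have bE : b = (m * 2)%N by rewrite muln2 -[LHS]odd_double_half (negbTE ob) add0n.
have m0 : (0 < m)%N by move: hb; rewrite bE; case: (m).
have zm : z ^+ m = -1.
  have : (z ^+ m) ^+ 2 == 1 by rewrite -exprM -bE (prim_expr_order pz).
  rewrite sqrf_eq1 => /orP[|/eqP //].
  rewrite -(prim_order_dvd pz) => /dvdn_leq => /(_ m0).
  by rewrite bE -{2}(muln1 m) leq_pmul2l // .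
case: (boolP (odd m)) => om.
  have := key (m + 2)%N.
  rewrite exprD zm mulN1r -altE -comp2E => h2.
  apply: (cert_contra D.chk_nsq D.Nnsq_neq0 hS); apply: h2.
  rewrite bE coprimeMr coprimen2 oddD om andbT /=.
  by rewrite coprime_sym /coprime gcdnDl -/(coprime m 2) coprimen2.
have := key (m + 1)%N.
rewrite exprD zm expr1 mulN1r -altE => h2.
apply: (cert_contra D.chk_neg D.Nneg_neq0 hS); apply: h2.
rewrite bE coprimeMr coprimen2 oddD (negbTE om) /= andbT.
by rewrite addn1 coprimeSn.
Qed.
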